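(* Let $F$ be a rooted directed forest on $n \geq 1$ vertices and let $k \geq 2$ be a natural number. Then $\psi_b(F,k) \geq \frac{n+k}{2k}$. Moreover, this lower bound is tight (it is attained whenever the expression $\frac{n+k}{2k}$ is an integer).
   Context: A rooted directed forest is a disjoint union of rooted trees, each with all edges oriented away from its root. In a rooted directed forest, a leaf is a vertex of out-degree $0$ (this includes isolated vertices), and a branching vertex is a vertex of out-degree at least $2$. A set $P$ of vertices of $F$ is a branching $k$-path vertex cover of $F$ if every leaf of $F$ belongs to $P$ and every directed path on $k$ vertices (of length $k-1$) in $F$ contains a branching vertex or a vertex of $P$. The branching $k$-path vertex cover number $\psi_b(F,k)$ is the minimum size of a branching $k$-path vertex cover of $F$. *)

(* Defs.v *)
From mathcomp Require Import all_boot all_order all_algebra.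
Set Implicit Arguments. Unset Strict Implicit. Unset Printing Implicit Defensive.

Section Forest.
Variables (T : finType) (e : rel T).

(* Each component is then a rooted tree with
   all arcs oriented away from its root (the unique vertex of in-degree 0). *)
Definition is_rooted_forest : bool :=
  [forall v, #|[set u | e u v]| <= 1] &&
  [forall u, forall v, e u v ==> ~~ connect e v u].

Definition outdeg (v : T) : nat := #|[set u | e v u]|.
Definition is_leaf (v : T) : bool := outdeg v == 0.
Definition is_branching (v : T) : bool := 1 < outdeg v.

Definition dpath (s : seq T) : bool :=
  if s is x :: s' then path e x s' else false.

Definition is_bkpvc (k : nat) (P : {set T}) : bool :=
  [forall v, is_leaf v ==> (v \in P)] &&
  [forall t : k.-tuple T,
     dpath t ==> has (fun v => is_branching v || (v \in P)) t].

(* psi_b(F,k): minimum size of a branching k-path vertex cover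
   (the whole vertex set is always one for k >= 1, so #|T| is a safe default). *)
Definition psi_b (k : nat) : nat :=
  \big[minn/#|T|]_(P : {set T} | is_bkpvc k P) #|P|.

End Forest.

(* Main.v *)
Require Import Defs.
From mathcomp Require Import all_boot all_order all_algebra zify.
Import Order.TTheory GRing.Theory Num.Theory.
Set Implicit Arguments. Unset Strict Implicit.

Lemma sum_ind (T : finType) (A : {set T}) : \sum_(v : T) ((v \in A) : nat) = #|A|.
Proof. rewrite -sum1_card [RHS]big_mkcond; apply: eq_bigr => v _; by case: (v \in A). Qed.

Lemma card_rel (T : finType) (P : pred T) : #|[set u | P u]| = \sum_u (P u : nat).
Proof. by rewrite -sum_ind; apply: eq_bigr => u _; rewrite inE. Qed.

Lemma forest_in (T : finType) (e : rel T) : is_rooted_forest e ->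
  forall v, #|[set u | e u v]| <= 1.
Proof. by case/andP => /forallP h _. Qed.

Lemma forest_ac (T : finType) (e : rel T) : is_rooted_forest e ->
  forall u v, e u v -> ~~ connect e v u.
Proof. by case/andP => _ /forallP h u v; move/forallP: (h u) => /(_ v) /implyP. Qed.

Lemma root_exists (T : finType) (e : rel T) :
  is_rooted_forest e -> 0 < #|T| -> exists r, forall u, ~~ e u r.
Proof.
move=> hf /card_gt0P [x0 _].
pose f v := #|[set u | connect e u v]|.
case: (@arg_minnP T x0 predT f isT) => r _ rmin.
exists r => u; apply/negP => eur.
have := rmin u isT; rewrite leqNgt => /negP; apply.
apply: proper_card; apply/properP; split.
  apply/subsetP => w; rewrite !inE => hw; exact: connect_trans hw (connect1 eur).
exists r; rewrite !inE ?connect0 //.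
exact: forest_ac hf _ _ eur.
Qed.

Lemma sum_out_in (T : finType) (e : rel T) :
  \sum_v outdeg e v = \sum_v #|[set u | e u v]|.
Proof.
rewrite /outdeg; under eq_bigr do rewrite card_rel.
under [RHS]eq_bigr do rewrite card_rel.
exact: exchange_big.
Qed.

Lemma branch_bound (T : finType) (e : rel T) :
  is_rooted_forest e -> 0 < #|T| ->
  #|[set v | is_branching e v]| + 1 <= #|[set v | is_leaf e v]|.
Proof.
move=> hf hn.
set L := [set v | is_leaf e v]; set B := [set v | is_branching e v].
have h1 : \sum_v (((v \notin L) : nat) + ((v \in B) : nat)) <= \sum_v outdeg e v.
  apply: leq_sum => v _; rewrite !inE /is_leaf /is_branching.
  by case: (outdeg e v) => [|[|d]].
have h2 : \sum_v #|[set u | e u v]| <= #|T| - 1.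
  have [r hr] := root_exists hf hn.
  rewrite (bigD1 r) //=.
  have -> : #|[set u | e u r]| = 0.
    by apply: eq_card0 => u; rewrite inE; apply/negbTE.
  rewrite add0n subn1 -(cardC1 r) -sum1_card.
  apply: leq_sum => v _; exact: forest_in.
rewrite big_split /= sum_ind in h1.
have h3 : \sum_v ((v \notin L) : nat) = #|~: L|.
  by rewrite -sum_ind; apply: eq_bigr => v _; rewrite in_setC.
rewrite h3 cardsCs setCK sum_out_in in h1.
have := max_card L. lia.
Qed.

Definition cnext (T : finType) (e : rel T) (x : T) := odflt x [pick u | e x u].
Definition cpar (T : finType) (e : rel T) (y : T) := odflt y [pick u | e u y].

Lemma cnext_edge (T : finType) (e : rel T) x : ~~ is_leaf e x -> e x (cnext e x).
Proof.
rewrite /cnext /is_leaf /outdeg; case: pickP => [u hu|h0] //= /negP []; apply/eqP.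
by apply: eq_card0 => u; rewrite inE h0.
Qed.

Lemma cpar_edge (T : finType) (e : rel T) x y : is_rooted_forest e -> e x y -> cpar e y = x.
Proof.
move=> hf hxy; rewrite /cpar; case: pickP => [u hu|h0] /=; last by rewrite h0 in hxy.
have /card_le1_eqP h := forest_in hf y.
by apply: h; rewrite inE.
Qed.

Lemma iter_back (T : finType) (e : rel T) v d : is_rooted_forest e ->
  (forall i, i < d -> ~~ is_leaf e (iter i (cnext e) v)) ->
  iter d (cpar e) (iter d (cnext e) v) = v.
Proof.
move=> hf; elim: d => [|d IH] h //.
rewrite iterSr iterS (cpar_edge hf (cnext_edge (h d (ltnSn d)))).
by apply: IH => i hi; apply: h; apply: ltnW.
Qed.

Lemma path_iter (T : finType) (e : rel T) v j a :
  (forall i, a <= i < a + j -> e (iter i (cnext e) v) (iter i.+1 (cnext e) v)) ->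
  path e (iter a (cnext e) v) [seq iter i (cnext e) v | i <- iota a.+1 j].
Proof.
elim: j a => [|j IH] a h //=.
rewrite h ?leqnn ?addnS ?ltnS ?leq_addr //=.
apply: IH => i /andP [h1 h2]; apply: h; apply/andP; split; lia.
Qed.

Lemma lower_nat (T : finType) (e : rel T) k (P : {set T}) :
  is_rooted_forest e -> 0 < #|T| -> 0 < k -> is_bkpvc e k P ->
  #|T| + k <= 2 * k * #|P|.
Proof.
move=> hf hn hk /andP [/forallP hl /forallP hc].
set L := [set v | is_leaf e v]; set B := [set v | is_branching e v].
have hb := branch_bound hf hn.
have hLP : #|L| <= #|P|.
  by apply: subset_leq_card; apply/subsetP => v; rewrite inE => /(implyP (hl v)).
set Q := P :|: B.
have hQ : #|Q| <= #|P| + #|B| by rewrite cardsU leq_subr.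
have hnl : forall v, v \notin Q -> ~~ is_leaf e v.
  move=> v; rewrite !inE negb_or => /andP [hv _]; apply/negP => /(implyP (hl v)).
  by rewrite (negbTE hv).
have surj : forall v, exists2 qd : T * 'I_k, qd.1 \in Q & v = iter qd.2 (cpar e) qd.1.
  move=> v.
  case: (boolP [exists d : 'I_k, iter d (cnext e) v \in Q]) => [/existsP [d0 hd0]|hno].
    have exP : exists d, iter d (cnext e) v \in Q by exists d0.
    case: (ex_minnP exP) => d hd hmin.
    have hdk : d < k by apply: leq_ltn_trans (hmin _ hd0) (ltn_ord d0).
    exists (iter d (cnext e) v, Ordinal hdk) => //=.
    rewrite iter_back //.
    move=> i hi; apply: hnl; apply/negP => hiQ.
    by have := hmin _ hiQ; rewrite leqNgt hi.
  exfalso.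
  have hno' : forall i, i < k -> iter i (cnext e) v \notin Q.
    move=> i hi; move: hno; rewrite negb_exists => /forallP /(_ (Ordinal hi)) //.
  pose s := mkseq (fun i => iter i (cnext e) v) k.
  have hs : size s == k by rewrite size_mkseq.
  have hd : dpath e s.
    rewrite /s; case: k hk hno' {hc hno hs s} => [//|k'] _ hno'.
    rewrite /dpath /mkseq /=.
    apply: (@path_iter _ _ v k' 0) => i /andP [_ hi].
    rewrite iterS; apply: cnext_edge; apply: hnl; apply: hno'; lia.
  have hh : ~~ has (fun v => is_branching e v || (v \in P)) s.
    apply/hasPn => x; rewrite /s /mkseq => /mapP [i]; rewrite mem_iota add0n => /andP [_ hi] ->.
    by have := hno' i hi; rewrite !inE !negb_or andbC.
  by have := hc (Tuple hs); rewrite /= hd /= (negbTE hh).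
have hsub : [set: T] \subset [set iter (nat_of_ord qd.2) (cpar e) qd.1 | qd : T * 'I_k in setX Q [set: 'I_k]].
  apply/subsetP => v _; have [qd hq ->] := surj v.
  by apply/imsetP; exists qd => //; rewrite inE hq inE.
have hnQ : #|T| <= #|Q| * k.
  rewrite -cardsT; apply: leq_trans (subset_leq_card hsub) _.
  by apply: leq_trans (leq_imset_card _ _) _; rewrite cardsX cardsT card_ord.
have h1 : #|Q| * k <= (#|P| + #|B|) * k by rewrite leq_mul2r hQ orbT.
have h2 : (#|P| + #|B|).+1 * k <= (2 * #|P|) * k.
  rewrite leq_mul2r; apply/orP; right; rewrite -/L -/B in hb; lia.
rewrite mulSn in h2.
rewrite (mulnC 2 k) -mulnA mulnC.
lia.
Qed.

Definition par2 (n m p v : nat) : option nat :=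
  if m <= v then Some (v - m) else if v == 0 then None
  else if v < p then Some (n - m + (v - 1)) else Some (n - m + (v - p)).

Definition e2 (n m p : nat) : rel 'I_n := fun u v => par2 n m p v == Some (nat_of_ord u).

Definition rk (k m v : nat) := k * (v %% m) + v %/ m.

Lemma rk_shift k m w : 0 < m -> w < m -> rk k m (k.-1 * m + w) = k * w + k.-1.
Proof. by move=> hm hw; rewrite /rk modnMDl modn_small // divnMDl // divn_small ?addn0. Qed.

Lemma rk_small k m v : v < m -> rk k m v = k * v.
Proof. by move=> hv; rewrite /rk modn_small // divn_small ?addn0. Qed.

Lemma rk_add k m u : 0 < m -> rk k m (u + m) = (rk k m u).+1.
Proof. by move=> hm; rewrite /rk modnDr (divnDr _ (dvdnn m)) divnn hm addn1 addnS. Qed.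

Lemma rank_lt n m p k (u v : 'I_n) : 0 < p -> m + 1 = 2 * p -> 0 < k -> forall K, k.-1 * m = K -> K + m = n ->
  e2 m p u v -> rk k m u < rk k m v.
Proof.
move=> hp hm hk K hK knm; rewrite /e2 /par2.
case: (leqP m v) => h1.
  move/eqP => [hu]; have -> : nat_of_ord v = u + m by lia.
  by rewrite rk_add // ?ltnSn //; lia.
case: (nat_of_ord v =P 0) => // h2.
have hm0 : 0 < m by lia.
case: (ltnP v p) => h3 /eqP [hu].
  have -> : nat_of_ord u = k.-1 * m + (v - 1) by rewrite hK; lia.
  rewrite rk_shift ?rk_small //; last by lia.
  have : k * (v - 1) + k <= k * v by rewrite -mulnSr subn1 prednK ?leqnn //; lia.
  lia.
have -> : nat_of_ord u = k.-1 * m + (v - p) by rewrite hK; lia.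
rewrite rk_shift ?rk_small //; last by lia.
have : k * (v - p) + k <= k * v by rewrite -mulnSr leq_mul2l; apply/orP; right; lia.
lia.
Qed.

Lemma rank_conn n m p k (a b : 'I_n) : 0 < p -> m + 1 = 2 * p -> 0 < k -> forall K, k.-1 * m = K -> K + m = n ->
  connect (e2 m p) a b -> rk k m a <= rk k m b.
Proof.
move=> hp hm hk K hK knm /connectP [s hs ->].
elim: s a hs => //= y s IH a /andP [hay hs].
exact: leq_trans (ltnW (rank_lt hp hm hk hK knm hay)) (IH y hs).
Qed.

Lemma forest2 n m p k : 0 < p -> m + 1 = 2 * p -> 0 < k -> forall K, k.-1 * m = K -> K + m = n ->
  is_rooted_forest (@e2 n m p).
Proof.
move=> hp hm hk K hK knm; apply/andP; split; apply/forallP.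
  move=> v; apply/card_le1_eqP => u1 u2; rewrite !inE /e2 => /eqP h1 /eqP h2.
  by apply: val_inj; rewrite h1 in h2; case: h2.
move=> u; apply/forallP => v; apply/implyP => huv; apply/negP => hc.
have := rank_conn hp hm hk hK knm hc; have := rank_lt hp hm hk hK knm huv; lia.
Qed.

Lemma card_ge n a : a <= n -> #|[set v : 'I_n | a <= v]| = n - a.
Proof.
move=> han; rewrite card_rel.
rewrite -(big_mkord xpredT (fun v => (a <= v : nat))).
rewrite (big_cat_nat (leq0n a) han) /=.
rewrite big_nat_cond big1; last first.
  by move=> i /andP [/andP [_ hi] _]; rewrite leqNgt hi.
rewrite add0n big_nat_cond (eq_bigr (fun _ => 1)); last first.
  by move=> i /andP [/andP [hi _] _]; rewrite hi.
by rewrite -big_nat_cond sum_nat_const_nat muln1.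
Qed.

Lemma chain2 n m p (s : seq 'I_n) (x : 'I_n) : 0 < p -> m + 1 = 2 * p -> m <= n ->
  path (@e2 n m p) x s -> all (fun y : 'I_n => y < n - m) (x :: s) ->
  nat_of_ord (last x s) = x + size s * m.
Proof.
move=> hp hm hmn; elim: s x => [|y s IH] x /=; first by rewrite mul0n addn0.
move=> /andP [hxy hs] /andP [hx hall].
have hy : nat_of_ord y = x + m.
  move: hxy; rewrite /e2 /par2.
  case: (leqP m y) => h1; first by move/eqP => [h]; lia.
  case: (nat_of_ord y =P 0) => // h2.
  by case: (ltnP y p) => h3 /eqP [h]; lia.
rewrite IH //= mulSn; lia.
Qed.

Lemma cover2 n m p k K : 0 < p -> m + 1 = 2 * p -> 0 < k -> k.-1 * m = K -> K + m = n ->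
  is_bkpvc (@e2 n m p) k [set v : 'I_n | n - m + (p - 1) <= v].
Proof.
move=> hp hm hk hK knm; apply/andP; split.
  apply/forallP => v; apply/implyP; apply: contraLR; rewrite inE -ltnNge => hv.
  rewrite /is_leaf /outdeg -lt0n; apply/card_gt0P.
  case: (ltnP v (n - m)) => hv1.
    have hw : v + m < n by lia.
    exists (Ordinal hw); rewrite inE /e2 /par2 /= leq_addl addnK //.
  have hw : (v - (n - m)).+1 < n by lia.
  exists (Ordinal hw); rewrite inE /e2 /par2 /=.
  case: (leqP m (v - (n - m)).+1) => h1; first by lia.
  case: (ltnP (v - (n - m)).+1 p) => h3; last by lia.
  apply/eqP; congr (Some _); lia.
apply/forallP => t; apply/implyP; case: t => s hs; rewrite [tval _]/=.
case: s hs => [//|x s] hs hpath; have {}hpath : path (e2 m p) x s := hpath.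
have hsz : size s = k.-1 by move/eqP: hs => <-.
apply/hasP.
case: (boolP (all (fun y : 'I_n => y < n - m) (x :: s))) => hall.
  exfalso; have hl := chain2 hp hm (_ : m <= n) hpath hall.
  have := allP hall _ (mem_last x s) => /=.
  rewrite hl ?hsz ?hK; lia.
move: hall; rewrite -has_predC => /hasP [y hy hny].
exists y => //; have {}hny : n - m <= y by rewrite leqNgt; exact: hny.
case: (leqP (n - m + (p - 1)) y) => hyP; first by rewrite inE hyP orbT.
apply/orP; left; rewrite /is_branching /outdeg.
have ha : (y - (n - m)).+1 < n by lia.
have hb : p + (y - (n - m)) < n by lia.
apply: leq_trans (_ : #|[set Ordinal ha; Ordinal hb]| <= _).
  rewrite cards2; case: eqP => //= [[]]. lia.
apply/subset_leq_card/subsetP => w; rewrite !inE => /orP [] /eqP -> /=; rewrite /e2 /par2 /=.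
  case: (leqP m (y - (n - m)).+1) => h1; first by lia.
  case: (ltnP (y - (n - m)).+1 p) => h3; last by lia.
  apply/eqP; congr (Some _); lia.
case: (leqP m (p + (y - (n - m)))) => h1; first by lia.
case: (p + (y - (n - m)) =P 0) => h4; first by lia.
case: (ltnP (p + (y - (n - m))) p) => h5; first by lia.
apply/eqP; congr (Some _); lia.
Qed.

Lemma bigmin_le (I : eqType) (r : seq I) (P : pred I) (F : I -> nat) idx j :
  j \in r -> P j -> \big[minn/idx]_(i <- r | P i) F i <= F j.
Proof.
elim: r => //= a r IH; rewrite inE big_cons => /orP [/eqP <-|hj] hP.
  by rewrite hP geq_minl.
case: (P a); last exact: IH.
exact: leq_trans (geq_minr _ _) (IH hj hP).
Qed.

Lemma psi_lower (T : finType) (e : rel T) k :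
  is_rooted_forest e -> 0 < #|T| -> 0 < k -> #|T| + k <= 2 * k * psi_b e k.
Proof.
move=> hf hn hk; rewrite /psi_b.
apply: (big_ind (fun x => #|T| + k <= 2 * k * x)).
- have h1 : k * 1 <= k * #|T| by rewrite leq_mul2l hn orbT.
  have h2 : 1 * #|T| <= k * #|T| by rewrite leq_mul2r hk orbT.
  rewrite -mulnA; lia.
- move=> x y hx hy; have [->|->] : minn x y = x \/ minn x y = y by rewrite /minn; case: ifP; auto.
  by []. by [].
- move=> P hP; exact: (lower_nat hf hn hk hP).
Qed.

Theorem theorem1 :
  (forall (T : finType) (e : rel T) (k : nat),
      is_rooted_forest e -> (1 <= #|T|)%N -> (2 <= k)%N ->
      ((#|T| + k)%:R / (2 * k)%:R <= (psi_b e k)%:R :> rat)%R)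
  /\
  (forall n k : nat, (1 <= n)%N -> (2 <= k)%N -> (2 * k %| n + k)%N ->
      exists e : rel 'I_n,
        is_rooted_forest e /\ psi_b e k = ((n + k) %/ (2 * k))%N).
Proof.
split.
  move=> T e k hf hn hk.
  rewrite ler_pdivrMr ?ltr0n ?muln_gt0 //; last by lia.
  rewrite -natrM ler_nat mulnC.
  by apply: psi_lower => //; lia.
move=> n k hn hk hd.
set p := (n + k) %/ (2 * k).
have hp2 : p * (2 * k) = n + k by rewrite divnK.
have hp : 0 < p by case: p hp2 => //=; lia.
set m := 2 * p - 1.
have hm : m + 1 = 2 * p by lia.
have hkm : k * m = n.
  have : k * (m + 1) = n + k by rewrite hm -hp2; nia.
  by rewrite mulnDr muln1 => /eqP; rewrite eqn_add2r => /eqP.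
have hK : k.-1 * m + m = n by rewrite addnC -mulSn prednK //; lia.
have hk0 : 0 < k by lia.
exists (@e2 n m p); split.
  exact: (@forest2 n m p k hp hm hk0 _ erefl hK).
have hcov := @cover2 n m p k _ hp hm hk0 erefl hK.
apply/eqP; rewrite eqn_leq; apply/andP; split.
  rewrite /psi_b. have := bigmin_le (fun P : {set 'I_n} => #|P|) #|'I_n| (mem_index_enum _) hcov.
  move=> h; apply: leq_trans h _.
  have hmn : m <= n by rewrite -hK leq_addl.
  rewrite card_ge; lia.
have := psi_lower (forest2 hp hm hk0 erefl hK) (_ : 0 < #|'I_n|) hk0.
rewrite card_ord -hp2 => /(_ hn).
rewrite (mulnC p) leq_pmul2l //; lia.
Qed.
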